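(* Let $E$ be a set and let $T$ be a set of clauses over $E$, where a clause is a pair written $X\Rightarrow Y$ with $X,Y\subseteq E$, standing for the formula $\bigwedge X\Rightarrow\bigvee Y$. Define the event structure $(E,\vdash_T)$ by: $X\vdash_T Y$ iff for every $Z\subseteq E$ with $(Y\Rightarrow Z)\in T$ we have $X\cap Z\neq\emptyset$. Then the set of left-closed configurations of $(E,\vdash_T)$ equals the set of models of $T$, i.e. the set of $m\subseteq E$ such that for every clause $(X\Rightarrow Y)\in T$, $X\subseteq m$ implies $Y\cap m\neq\emptyset$.
   Context: An event structure is a pair $(E,\vdash)$ with $\vdash\subseteq\mathcal{P}(E)\times\mathcal{P}(E)$. A set $X\subseteq E$ is a left-closed configuration iff for every $Y\subseteq X$ there exists $Z\subseteq X$ with $Z\vdash Y$. *)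

(* Defs.v *)
Definition incl {E : Type} (X Y : E -> Prop) : Prop := forall e, X e -> Y e.

Definition meets {E : Type} (X Y : E -> Prop) : Prop := exists e, X e /\ Y e.

Definition enabling (E : Type) : Type := (E -> Prop) -> (E -> Prop) -> Prop.

Definition left_closed_config {E : Type} (vdash : enabling E) (X : E -> Prop) : Prop :=
  forall Y, incl Y X -> exists Z, incl Z X /\ vdash Z Y.

Definition clause (E : Type) : Type := ((E -> Prop) * (E -> Prop))%type.
Definition theory (E : Type) : Type := clause E -> Prop.

Definition vdash_T {E : Type} (T : theory E) : enabling E :=
  fun X Y => forall Z, T (Y, Z) -> meets X Z.

Definition model {E : Type} (T : theory E) (m : E -> Prop) : Prop :=
  forall X Y, T (X, Y) -> incl X m -> meets Y m.

(* Main.v *)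
Require Import Defs.

Theorem mainTheorem4 (E : Type) (T : theory E) (m : E -> Prop) :
  left_closed_config (vdash_T T) m <-> model T m.
Proof.
  unfold left_closed_config, model, vdash_T, meets, incl. split.
  - intros H X Y HT HX. destruct (H X HX) as [Z [HZ HV]].
    destruct (HV Y HT) as [e [He1 He2]]. exists e. split; auto.
  - intros H Y HY. exists m. split; [auto|].
    intros Z HT. destruct (H Y Z HT HY) as [e [He1 He2]]. exists e. split; auto.
Qed.
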